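(* Let $G$ be a finitely generated group and fix $S\in\Gamma_n(G)$. Let $\alpha>1$ be a constant and $(k_i)_{i\ge1}$ a log-dense sequence. Suppose that for each $i\ge1$ there is a path $\gamma$ in $\Gamma_n(G)$ of length at most $\alpha k_i$ which starts at $S$ and visits some vertices $S_1,\dots,S_{k_i}\in\Gamma_n(G)$ in that order, and that there is a cubic $k_i$-tuple $(g_1,\dots,g_{k_i})$ with $g_j$ an entry of $S_j$ for each $1\le j\le k_i$. Then $\Gamma_m(G,S)$ has exponential growth for every $m\ge n+1$.
   Context: For a group $G$, a generating $n$-tuple is $(g_1,\dots,g_n)\in G^n$ generating $G$. The product replacement graph $\Gamma_n(G)$ has vertices the generating $n$-tuples, with edges from $(g_1,\dots,g_n)$ to each tuple obtained by replacing $g_j$ by $g_jg_i^{\pm1}$ or $g_i^{\pm1}g_j$, for every ordered pair $i\neq j$. For $S=(g_1,\dots,g_n)$ and $m\ge n$, $\Gamma_m(G,S)$ is the connected component of $\Gamma_m(G)$ containing $(g_1,\dots,g_n,1,\dots,1)$ ($m-n$ identity entries). A connected graph has exponential growth if for some vertex $v$ there is $\alpha>1$ such that the number of vertices at distance at most $r$ from $v$ is at least $\alpha^r$ for all sufficiently large $r$. A sequence of positive integers $(k_i)$ is log-dense if it is increasing and $k_{i+1}\le\beta k_i$ for some constant $\beta$ and all $i$. A tuple $(g_1,\dots,g_k)\in G^k$ is cubic if the set $\{g_1^{\varepsilon_1}g_2^{\varepsilon_2}\cdots g_k^{\varepsilon_k}:\varepsilon_j\in\{0,1\}\}$ has exactly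 $2^k$ elements. *)

(* Defs.v *)
From Stdlib Require Import Reals List.
From mathcomp Require Import all_boot.

Set Implicit Arguments.
Unset Strict Implicit.
Unset Printing Implicit Defensive.

Record group := Group {
  carrier :> Type;
  mul : carrier -> carrier -> carrier;
  inv : carrier -> carrier;
  one : carrier;
  mulA : forall x y z, mul x (mul y z) = mul (mul x y) z;
  mul1g : forall x, mul one x = x;
  mulg1 : forall x, mul x one = x;
  mulVg : forall x, mul (inv x) x = one;
  mulgV : forall x, mul x (inv x) = one
}.

Section GroupDefs.
Variable G : group.

Definition subgroup (H : G -> Prop) : Prop :=
  H (one G) /\ (forall x y, H x -> H y -> H (mul x y)) /\ (forall x, H x -> H (inv x)).

Definition tup (n : nat) := 'I_n -> G.

Definition generating (n : nat) (s : tup n) : Prop :=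
  forall H : G -> Prop, subgroup H -> (forall c, H (s c)) -> forall x, H x.

Definition fin_generated : Prop := exists d (s : tup d), generating s.

(* Edges of the product replacement graph: replace g_j by g_j g_i^{+-1} or
   g_i^{+-1} g_j, for i <> j. *)
Definition pr_adj (n : nat) (s t : tup n) : Prop :=
  exists (i j : 'I_n), i <> j /\ exists h : G, (h = s i \/ h = inv (s i)) /\
    (t = (fun c => if c == j then mul (s j) h else s c) \/
     t = (fun c => if c == j then mul h (s j) else s c)).

(* path v :: l in Gamma_n(G): all vertices generating, consecutive ones adjacent;
   its length is size l *)
Fixpoint adj_chain (n : nat) (v : tup n) (l : seq (tup n)) : Prop :=
  match l with
  | [::] => True
  | w :: l' => pr_adj v w /\ adj_chain w l'
  end.

Definition pr_path (n : nat) (v : tup n) (l : seq (tup n)) : Prop :=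
  generating v /\ (forall w, List.In w l -> generating w) /\ adj_chain v l.

Definition dist_le (n : nat) (v w : tup n) (r : nat) : Prop :=
  exists l, size l <= r /\ pr_path v l /\ last v l = w.

(* (g_1, ..., g_n, 1, ..., 1) in G^m *)
Definition pad (n m : nat) (s : tup n) : tup m :=
  fun c => match @insub nat (fun x => x < n) _ (val c) with
           | Some c' => s c'
           | None => one G
           end.

Definition component (m : nat) (v0 : tup m) (w : tup m) : Prop :=
  exists r, dist_le v0 w r.

(* exponential growth of the component containing v0 (balls counted in the
   component, which is the same as in Gamma_m(G)) *)
Definition exp_growth (m : nat) (v0 : tup m) : Prop :=
  exists v, component v0 v /\ exists alpha : R, Rlt 1 alpha /\
    exists r0 : nat, forall r : nat, r0 <= r ->
      exists l : seq (tup m), List.NoDup l /\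
        (forall w, List.In w l -> dist_le v w r) /\
        (Rle (pow alpha r) (INR (size l))).

Definition cube_prod (k : nat) (g : tup k) (e : {ffun 'I_k -> bool}) : G :=
  foldr (fun j acc => mul (if e j then g j else one G) acc) (one G) (enum 'I_k).

(* cubic: the 2^k products are pairwise distinct, i.e. the set of products
   has exactly 2^k elements *)
Definition cubic (k : nat) (g : tup k) : Prop := injective (cube_prod g).

End GroupDefs.

Definition log_dense (k : nat -> nat) : Prop :=
  (forall i, 1 <= i -> 0 < k i) /\
  (forall i, 1 <= i -> k i < k i.+1) /\
  exists beta : R, forall i, 1 <= i -> Rle (INR (k i.+1)) (Rmult beta (INR (k i))).

(* Main.v *)
Require Import Defs.
From Stdlib Require Import Reals List FunctionalExtensionality Classical Lra.
From mathcomp Require Import all_boot zify.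

Lemma adj_chain_cat (G : group) (n : nat) (u : tup G n) l1 l2 :
  adj_chain u l1 -> adj_chain (last u l1) l2 -> adj_chain u (l1 ++ l2).
Proof. elim: l1 u => [|w l1 IH] u //= [h1 h2] h3; split=> //; exact: IH. Qed.

Lemma dist_refl (G : group) (n : nat) (u : tup G n) : generating u -> dist_le u u 0.
Proof. move=> gu; exists [::]; split=> //; split=> //. Qed.

Lemma dist_step (G : group) (n : nat) (u w : tup G n) :
  generating u -> generating w -> pr_adj u w -> dist_le u w 1.
Proof.
move=> gu gw a; exists [:: w]; split=> //; split=> //.
split=> //; split; first by move=> x [<-|[]].
by split.
Qed.

Lemma dist_trans (G : group) (n : nat) (u v w : tup G n) r1 r2 :
  dist_le u v r1 -> dist_le v w r2 -> dist_le u w (r1 + r2).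
Proof.
rewrite /dist_le /pr_path.
intros [l1 [s1 [[g1 [i1 c1]] e1]]] [l2 [s2 [[g2 [i2 c2]] e2]]].
exists (l1 ++ l2); split; first by rewrite size_cat; lia.
split; last by rewrite last_cat e1.
split=> //; split.
  move=> x hx; case: (in_app_or _ _ _ hx) => ?; [exact: i1| exact: i2].
by apply: adj_chain_cat => //; rewrite e1.
Qed.

Lemma dist_mono (G : group) (n : nat) (u w : tup G n) r r' :
  dist_le u w r -> r <= r' -> dist_le u w r'.
Proof. move=> [l [s h]] le; exists l; split=> //; lia. Qed.

Lemma nth_gen (G : group) (n : nat) (l : seq (tup G n)) : forall (v d : tup G n) a,
  generating d -> generating v -> (forall w, List.In w l -> generating w) ->
  generating (nth d (v :: l) a).
Proof.
elim: l => [|w l IH] v d [|a] gd gv gl //=.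
  by case: a.
apply: IH => //; first by apply: gl; left.
by move=> x hx; apply: gl; right.
Qed.

Lemma chain_step (G : group) (n : nat) (l : seq (tup G n)) : forall (v : tup G n) a,
  adj_chain v l -> a < size l -> pr_adj (nth v (v :: l) a) (nth v (v :: l) a.+1).
Proof.
elim: l => [|w l IH] v a //= [h1 h2] ha.
case: a ha => [|a] ha //=.
have := IH w a h2 ha.
rewrite (set_nth_default v w (n:=a)) /=; last by lia.
rewrite (set_nth_default v w (n:=a)) /=; last by lia.
done.
Qed.
Arguments dist_refl {G n u} _.
Arguments dist_step {G n u w} _ _ _.
Arguments dist_trans {G n u v w r1 r2} _ _.
Arguments dist_mono {G n u w r r'} _ _.

Definition Lf (G : group) (n m : nat) (x : G) (T : tup G n) : tup G m :=
  fun c => match @insub nat (fun y => y < n) _ (val c) with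
           | Some c' => T c'
           | None => if val c == n then x else Defs.one G
           end.
Arguments Lf {G n} m x T.

Lemma pad_Lf (G : group) (n m : nat) (S : tup G n) : @pad G n m S = Lf m (Defs.one G) S.
Proof. apply: functional_extensionality => c; rewrite /pad /Lf; case: insub => //; by case: (_ == _). Qed.

Lemma LS (G : group) (n m : nat) (x : G) (T : tup G n) (c : 'I_m) (u : 'I_n) :
  val c = val u -> Lf m x T c = T u.
Proof.
move=> e; rewrite /Lf; case: insubP => [u' _ e'|]; first by congr T; apply: val_inj; rewrite e' e.
by rewrite e ltn_ord.
Qed.

Arguments LS {G n m x T c} u _.
Lemma LN (G : group) (n m : nat) (x : G) (T : tup G n) (c : 'I_m) :
  n <= val c -> Lf m x T c = if val c == n then x else Defs.one G.
Proof. move=> h; rewrite /Lf; case: insubP => [u' hu e'|] //; lia. Qed.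

Arguments LN {G n m x T c} _.
Lemma Lgen (G : group) (n m : nat) (hnm : n <= m) (x : G) (T : tup G n) :
  generating T -> generating (Lf m x T).
Proof.
move=> gT H sH hall; apply: gT => // c.
have := hall (widen_ord hnm c); by rewrite (LS c).
Qed.

Lemma Llift (G : group) (n m : nat) (hnm : n <= m) (x : G) (T T' : tup G n) :
  pr_adj T T' -> pr_adj (Lf m x T) (Lf m x T').
Proof.
move=> [i [j [ne [h [hh ht]]]]].
exists (widen_ord hnm i), (widen_ord hnm j); split.
  by move=> /(congr1 val) /= /val_inj.
exists h; split; first by rewrite (LS i).
have key : forall (c : 'I_m) (u : 'I_n), val c = val u -> (c == widen_ord hnm j) = (u == j).
  by move=> c u e; rewrite -[LHS]val_eqE -[RHS]val_eqE /= e.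
case: ht => -> ; [left|right]; apply: functional_extensionality => c;
  (case: (ltnP (val c) n) => hc;
  [ rewrite (LS (T:=T) (c:=c) (Ordinal hc)) // (LS (c:=c) (Ordinal hc)) // (LS j) //
      (key c (Ordinal hc)) //
  | rewrite (LN hc) (LN hc);
    have -> : (c == widen_ord hnm j) = false by (apply/eqP => e; move: hc (ltn_ord j); rewrite e /=; lia) ]).
all: done.
Qed.

Lemma Lmul (G : group) (n m : nat) (hnm : n < m) (x : G) (T : tup G n) (c : 'I_n) :
  pr_adj (Lf m x T) (Lf m (Defs.mul x (T c)) T).
Proof.
exists (widen_ord (ltnW hnm) c), (Ordinal hnm); split.
  by move=> /(congr1 val) /=; move: (ltn_ord c); lia.
exists (T c); split; first by left; rewrite (LS c).
left; apply: functional_extensionality => c0.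
case: (ltnP (val c0) n) => hc.
  rewrite (LS (c:=c0) (Ordinal hc)) // (LS (c:=c0) (Ordinal hc)) //.
  have -> : (c0 == Ordinal hnm) = false by apply/eqP => e; move: hc; rewrite e /=; lia.
  done.
rewrite (LN hc) (LN hc).
case: eqP => e.
  have -> : c0 = Ordinal hnm by apply: val_inj.
  by rewrite eqxx (@LN _ _ _ _ _ (Ordinal hnm)) //= eqxx.
have -> : (c0 == Ordinal hnm) = false by apply/eqP => e'; apply: e; rewrite e'.
done.
Qed.

Lemma Linj (G : group) (n m : nat) (hnm : n < m) (x y : G) (T T' : tup G n) :
  Lf m x T = Lf m y T' -> x = y.
Proof.
move=> /(congr1 (fun f => f (Ordinal hnm))).
by rewrite !(@LN _ _ _ _ _ (Ordinal hnm)) //= eqxx.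
Qed.

Lemma walk (G : group) (n m : nat) (hnm : n <= m) (S : tup G n) l (x : G) :
  pr_path S l -> forall d a, a + d <= size l ->
  dist_le (Lf m x (nth S (S :: l) a)) (Lf m x (nth S (S :: l) (a + d))) d.
Proof.
move=> [gS [gl cl]]; elim=> [|d IH] a h.
  rewrite addn0; apply: dist_refl; apply: Lgen => //; exact: nth_gen.
rewrite -addn1 addnA; apply: dist_trans; first by apply: IH; lia.
apply: dist_step; try (apply: Lgen => //; exact: nth_gen).
apply: Llift => //; rewrite addn1; apply: chain_step => //; lia.
Qed.

Definition Fe (G : group) k (g : tup G k) (e : {ffun 'I_k -> bool}) (j : nat) : G :=
  match @insub nat (fun y => y < k) _ j with
  | Some u => if e u then g u else Defs.one G
  | None => Defs.one G
  end.
Arguments Fe {G k} g e j.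

Definition Qp (G : group) k (g : tup G k) (e : {ffun 'I_k -> bool}) (j : nat) : G :=
  foldr (fun i acc => Defs.mul (Fe g e i) acc) (Defs.one G) (iota 0 j).
Arguments Qp {G k} g e j.

Lemma foldr_mul (G : group) (F : nat -> G) s z :
  foldr (fun i acc => Defs.mul (F i) acc) z s =
  Defs.mul (foldr (fun i acc => Defs.mul (F i) acc) (Defs.one G) s) z.
Proof. elim: s => [|a s IH] /=; first by rewrite Defs.mul1g. by rewrite IH Defs.mulA. Qed.

Lemma QpS (G : group) k (g : tup G k) e j : Qp g e j.+1 = Defs.mul (Qp g e j) (Fe g e j).
Proof.
rewrite /Qp -addn1 iotaD foldr_cat /= foldr_mul; congr Defs.mul; by rewrite Defs.mulg1.
Qed.

Lemma Qpk (G : group) k (g : tup G k) e : Qp g e k = cube_prod g e.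
Proof.
rewrite /Qp /cube_prod -val_enum_ord foldr_map.
elim: (enum 'I_k) => //= u s ->; congr Defs.mul.
by rewrite /Fe valK.
Qed.

Lemma nodup_map (T : eqType) (A : Type) (f : T -> A) (s : seq T) :
  injective f -> uniq s -> List.NoDup (map f s).
Proof.
move=> fi; elim: s => [|a s IH] /=; first by constructor.
move=> /andP [ha hs]; constructor; last exact: IH.
move=> hin; move: ha; suff : a \in s by move=> ->.
elim: s hin {IH hs} => [|b s IH] //= [e|h].
  by rewrite (fi _ _ e) mem_head.
by rewrite in_cons IH ?orbT.
Qed.

Lemma ball_big (G : group) (n m : nat) (hnm : n < m) (S : tup G n) (l : seq (tup G n))
  (k : nat) (Sj : 'I_k -> tup G n) (t : 'I_k -> nat) (g : tup G k) :
  pr_path S l ->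
  (forall j1 j2 : 'I_k, j1 <= j2 -> t j1 <= t j2) ->
  (forall j, t j <= size l /\ nth S (S :: l) (t j) = Sj j) ->
  (forall j, exists c : 'I_n, g j = Sj j c) ->
  cubic g ->
  forall r, size l + k <= r ->
  exists l' : seq (tup G m), List.NoDup l' /\
     (forall w, List.In w l' -> dist_le (@pad G n m S) w r) /\ size l' = 2 ^ k.
Proof.
move=> pp mono ht hg cub r hr.
have hnm' : n <= m by lia.
pose tn j := match @insub nat (fun y => y < k) _ j with Some u => t u | None => 0 end.
pose tau j := match j with 0 => 0 | j'.+1 => tn j' end.
have tnE : forall j (hj : j < k), tn j = t (Ordinal hj).
  move=> j hj; rewrite /tn; case: insubP => [u _ e|]; last by rewrite hj.
  by congr t; apply: val_inj; rewrite /= e.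
have tnl : forall j, tn j <= size l.
  move=> j; rewrite /tn; case: insub => // u; exact: (ht u).1.
have gnth : forall a, generating (nth S (S :: l) a).
  by case: pp => gS [gl _] a; exact: nth_gen.
have claim : forall e j, j <= k ->
    dist_le (@pad G n m S) (Lf m (Qp g e j) (nth S (S :: l) (tau j))) (tau j + j).
  move=> e; elim=> [|j IH] hj.
    rewrite pad_Lf /=; apply: dist_refl; apply: Lgen => //; by case: pp.
  have hjk : j < k by lia.
  have le1 : tau j <= t (Ordinal hjk).
    clear IH; case: j hj hjk => [|j'] hj hjk //=.
    have hj' : j' < k by lia.
    rewrite (tnE _ hj'); apply: mono => /=; lia.
  set u := Ordinal hjk.
  have tul : t u <= size l by exact: (ht u).1.
  have := @walk G n m hnm' S l (Qp g e j) pp (t u - tau j) (tau j).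
  rewrite subnKC // => /(_ tul) hw.
  have hq := dist_trans (IH (ltnW hj)) hw.
  rewrite QpS /=.
  have Fu : Fe g e j = if e u then g u else Defs.one G.
    rewrite /Fe; case: insubP => [u' _ e'|]; last by rewrite hjk.
    by have -> : u' = u by apply: val_inj; rewrite e'.
  rewrite (tnE _ hjk) -/u Fu.
  apply: (dist_mono (r := (tau j + j + (t u - tau j)) + 1)); last (move: le1; rewrite -/u; lia).
  apply: (dist_trans hq).
  case: (e u).
    case: (hg u) => c ->; rewrite -(ht u).2.
    apply: dist_step; try (apply: Lgen => //; exact: gnth).
    exact: Lmul.
  rewrite Defs.mulg1; apply: (dist_mono (r := 0)) => //.
  apply: dist_refl; apply: Lgen => //; exact: gnth.
pose V := nth S (S :: l) (tau k).
exists (map (fun e => Lf m (cube_prod g e) V) (enum {ffun 'I_k -> bool})).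
split.
  apply: nodup_map; last exact: enum_uniq.
  by move=> e1 e2 /Linj -/(_ hnm) /cub.
split.
  move=> w hw.
  have : exists e, w = Lf m (cube_prod g e) V.
    elim: (enum _) hw => [|a s IH] //= [<-|h]; [by exists a | exact: IH].
  case=> e ->; rewrite -Qpk.
  apply: dist_mono; first exact: (claim e k (leqnn k)).
  have : tau k <= size l by case: (k) => //= k'; exact: tnl.
  lia.
by rewrite size_map -cardE card_ffun card_bool card_ord.
Qed.

Lemma search_step (P : nat -> Prop) d :
  P 1%N -> ~ P (1 + d)%N -> exists i, (1 <= i)%N /\ P i /\ ~ P i.+1.
Proof.
move=> h1; elim: d => [|d IH] hn; first by rewrite addn0 in hn.
case: (classic (P (1 + d)%N)) => h.
  exists (1 + d)%N; split=> //; split=> //; by rewrite -addnS.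
exact: IH.
Qed.


Local Open Scope R_scope.
Lemma INR_expn2 k : INR (2 ^ k)%N = 2 ^ k.
Proof. elim: k => [|k IH] //; rewrite expnS -multE mult_INR IH /=; reflexivity. Qed.

Lemma kge (k : nat -> nat) : log_dense k -> forall i, (1 <= i)%N -> (i <= k i)%N.
Proof.
move=> [k0 [kinc _]]; elim=> [|i IH] //; case: i IH => [|i] IH _; first exact: k0.
have := kinc i.+1 isT; have := IH isT; lia.
Qed.

Local Close Scope R_scope.
Theorem lemma3p10 (G : group) (n : nat) (S : tup G n) (alpha : R) (k : nat -> nat) :
  fin_generated G ->
  generating S ->
  Rlt 1 alpha ->
  log_dense k ->
  (forall i, 1 <= i ->
     exists (l : seq (tup G n)),
       pr_path S l /\ Rle (INR (size l)) (Rmult alpha (INR (k i))) /\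
       exists (Sj : 'I_(k i) -> tup G n) (t : 'I_(k i) -> nat) (g : tup G (k i)),
         (forall j1 j2 : 'I_(k i), j1 <= j2 -> t j1 <= t j2) /\
         (forall j, t j <= size l /\ nth S (S :: l) (t j) = Sj j) /\
         (forall j, exists c : 'I_n, g j = Sj j c) /\
         cubic g) ->
  forall m : nat, n.+1 <= m -> exp_growth (@pad G n m S).
Proof.
move=> _ gS ha ld H m hm.
Local Open Scope R_scope.
have kg := @kge k ld.
have ld' := ld; case: ld' => [k0 [kinc [beta hb]]].
set C := alpha + 1.
have k1 : 0 < INR (k 1%N) by apply: lt_0_INR; apply/ltP; exact: k0.
have k2 : INR (k 1%N) < INR (k 2%N) by apply: lt_INR; apply/ltP; exact: kinc.
have hb1 := hb 1%N isT.
have bpos : 0 < beta by nra.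
have Xpos : 0 < C * beta by rewrite /C; nra.
exists (@pad G n m S); split.
  by exists 0%N; apply: dist_refl; rewrite pad_Lf; apply: Lgen => //; lia.
exists (Rpower 2 (/ (C * beta))); split.
  rewrite -{1}(Rpower_O 2) //; last lra.
  apply: Rpower_lt; first lra.
  by apply: Rinv_0_lt_compat.
have [N hN] := INR_unbounded (C * INR (k 1%N)).
exists N => r hr.
pose P i := C * INR (k i) <= INR r.
have P1 : P 1%N.
  rewrite /P; have := le_INR _ _ (elimT leP hr); lra.
have Pn : ~ P (1 + r)%N.
  rewrite /P => h.
  have := le_INR _ _ (elimT leP (kg (1 + r)%N isT)).
  rewrite plus_INR /=.
  have : 0 <= INR (k (1 + r)%N) by apply: pos_INR.
  rewrite /C in h; nra.
have [i [hi [Pi nPi]]] := @search_step P r P1 Pn.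
have [l [pp [hl [Sj [t [g [mono [ht [hg cub]]]]]]]]] := H i hi.
have hnm : (n < m)%N by lia.
have hsz : (size l + k i <= r)%N.
  apply/leP; apply: INR_le; rewrite plus_INR; rewrite /P /C in Pi; lra.
have [l' [nd [inl sz]]] := @ball_big G n m hnm S l (k i) Sj t g pp mono ht hg cub r hsz.
exists l'; split=> //; split=> //.
rewrite sz INR_expn2 -(Rpower_pow (k i) 2); last lra.
rewrite -(Rpower_pow r (Rpower 2 _)); last by apply: exp_pos.
rewrite Rpower_mult; apply: Rle_Rpower; first lra.
have hbi := hb i hi.
have : INR r < C * INR (k i.+1) by rewrite /P in nPi; lra.
move=> hr2.
have hr3 : INR r < (C * beta) * INR (k i).
  have : C * INR (k i.+1) <= C * (beta * INR (k i)) by apply: Rmult_le_compat_l; rewrite /C; lra.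
  lra.
apply: (Rmult_le_reg_l (C * beta)) => //.
have -> : C * beta * (/ (C * beta) * INR r) = INR r.
  rewrite -Rmult_assoc Rinv_r; [ring | lra].
lra.
Qed.
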